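(* Let $n\ge 2$ and $N\ge 2$ be integers, and let $C=\{\boldsymbol{x}_1,\ldots,\boldsymbol{x}_N\}\subset\mathbb{S}^{n-1}$ be a set of $N$ distinct points on the unit sphere of $\mathbb{R}^n$. Put $$d_C:=\min_{1\le i<j\le N}\|\boldsymbol{x}_i-\boldsymbol{x}_j\|_2,\qquad t_C:=\max_{1\le i<j\le N}\boldsymbol{x}_i\cdot\boldsymbol{x}_j .$$ Suppose that: (i) there exist a nonnegative integer $k_1$ and a function $f\in P(k_1,t_C,n)$ such that $N=f^{\#}$; (ii) there exists $t_2\in[-1,t_C)$ such that $f(t)\neq 0$ for all $t\in(t_2,t_C)$; (iii) there exist a nonnegative integer $K_2$ and a function $g\in P(K_2,t_2,n)$ such that $N>g^{\#}$. Then $C$ is a solution of the Tammes problem for $n$ and $N$, that is, $$d_{n,N}=d_C,$$ where $d_{n,N}:=\max\left\{\min_{1\le i<j\le N}\|\boldsymbol{y}_i-\boldsymbol{y}_j\|_2 : \boldsymbol{y}_1,\ldots,\boldsymbol{y}_N\in\mathbb{S}^{n-1}\right\}$.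
   Context: $\mathbb{S}^{n-1}$ denotes the unit sphere in $\mathbb{R}^n$ and $\boldsymbol{x}\cdot\boldsymbol{y}$ the standard inner product. For fixed $n$, the Gegenbauer polynomials $P_k^{(n)}$ are defined by $P_0^{(n)}(t)=1$, $P_1^{(n)}(t)=t$, and for $k\ge 1$ $$P_{k+1}^{(n)}(t)=\frac{(2k+n-2)\,t\,P_k^{(n)}(t)-k\,P_{k-1}^{(n)}(t)}{k+n-2}.$$ For an integer $k\ge 0$ and $\tau\in[-1,1)$, the set $P(k,\tau,n)$ consists of all functions $f$ such that (a) $f(t)=\sum_{i=0}^{k}c_iP_i^{(n)}(t)$ with real coefficients satisfying $c_0>0$ and $c_i\ge 0$ for $i=1,\ldots,k$, and (b) $f(t)\le 0$ for all $t\in[-1,\tau]$. For such $f$ (with this expansion), $f^{\#}:=f(1)/c_0$. *)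

(* Defs.v *)
From HB Require Import structures.
From mathcomp Require Import all_boot all_order all_algebra.
From mathcomp Require Import classical_sets boolp reals.
Set Implicit Arguments. Unset Strict Implicit. Unset Printing Implicit Defensive.
Import Order.TTheory GRing.Theory Num.Theory.
Local Open Scope ring_scope.
Local Open Scope classical_set_scope.

Section Defs.
Variable R : realType.

Definition dotp (n : nat) (u v : 'rV[R]_n) : R := \sum_(j < n) u 0 j * v 0 j.

Definition dist2 (n : nat) (u v : 'rV[R]_n) : R := Num.sqrt (dotp (u - v) (u - v)).

Definition on_sphere (n : nat) (u : 'rV[R]_n) : Prop := dotp u u = 1.

Definition min_dist (n N : nat) (x : 'I_N -> 'rV[R]_n) : R :=
  inf [set r | exists i j : 'I_N, (i < j)%N /\ r = dist2 (x i) (x j)].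

Definition max_inner (n N : nat) (x : 'I_N -> 'rV[R]_n) : R :=
  sup [set r | exists i j : 'I_N, (i < j)%N /\ r = dotp (x i) (x j)].

Definition tammes_d (n N : nat) : R :=
  sup [set r | exists y : 'I_N -> 'rV[R]_n, (forall i, on_sphere (y i)) /\ r = min_dist y].

(* Gegenbauer polynomials: gegen_pair n k t = (P_k^{(n)}(t), P_{k+1}^{(n)}(t)) *)
Fixpoint gegen_pair (n k : nat) (t : R) : R * R :=
  match k with
  | 0 => (1, t)
  | k'.+1 =>
      let: (a, b) := gegen_pair n k' t in
      (b, (((2 * k'.+1)%:R + n%:R - 2) * t * b - (k'.+1)%:R * a)
           / ((k'.+1)%:R + n%:R - 2))
  end.

Definition gegen (n k : nat) (t : R) : R := (gegen_pair n k t).1.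

Definition gegen_sum (n k : nat) (c : nat -> R) (t : R) : R :=
  \sum_(i < k.+1) c i * gegen n i t.

Definition inP (k : nat) (tau : R) (n : nat) (c : nat -> R) : Prop :=
  [/\ -1 <= tau < 1,
      0 < c 0%N,
      (forall i : nat, (1 <= i <= k)%N -> 0 <= c i)
    & (forall t : R, -1 <= t <= tau -> gegen_sum n k c t <= 0)].

Definition fsharp (n k : nat) (c : nat -> R) : R := gegen_sum n k c 1 / c 0%N.

End Defs.

(* Main.v *)
Require Import Defs.
From HB Require Import structures.
From mathcomp Require Import all_boot all_order all_algebra.
From mathcomp Require Import classical_sets boolp reals.
From mathcomp Require Import mpoly.
From mathcomp Require Import ring lra zify.
Import Order.TTheory GRing.Theory Num.Theory.
Local Open Scope ring_scope.

Section Poly.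
Variable R : realType.
Variable n : nat.
Local Notation P := {mpoly R[n]}.
Local Notation d i p := (mderiv i p).

Definition Lf (v : 'I_n -> R) : P := \sum_i (v i)%:MP * 'X_i.
Definition Qf : P := \sum_i 'X_i * 'X_i.
Definition Eop (p : P) : P := \sum_i 'X_i * d i p.
Definition dir (v : 'I_n -> R) (p : P) : P := \sum_i (v i)%:MP * d i p.
Definition lap (p : P) : P := \sum_i d i (d i p).
Definition z0 : 'I_n -> R := fun _ => 0.

Lemma sum_delta (T : nzRingType) i (F : 'I_n -> T) :
  \sum_j (i == j)%:R * F j = F i.
Proof.
rewrite (bigD1 i) //= eqxx mul1r big1 ?addr0 // => j /negbTE.
by rewrite eq_sym => ->; rewrite mul0r.
Qed.

Lemma sum_delta' (T : nzRingType) i (F : 'I_n -> T) :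
  \sum_j F j * (j == i)%:R = F i.
Proof.
rewrite (bigD1 i) //= eqxx mulr1 big1 ?addr0 // => j /negbTE ->.
by rewrite mulr0.
Qed.

Lemma dX i j : d j ('X_i : P) = ((i == j)%:R)%:MP.
Proof.
rewrite mderivX mnm1E; case: eqP => [->|_].
  have -> : (U_(j) - U_(j))%MM = 0%MM by apply/mnmP => l; rewrite mnmBE subnn mnm0E.
  by rewrite mpolyX0 scale1r mpolyC1.
by rewrite scale0r mpolyC0.
Qed.

Lemma d_sum j (F : 'I_n -> P) : d j (\sum_i F i) = \sum_i d j (F i).
Proof. by apply: (big_morph (mderiv j)); [exact: mderivD | exact: mderiv0]. Qed.

Lemma ev_sum w (F : 'I_n -> P) : (\sum_i F i).@[w] = \sum_i (F i).@[w].
Proof. by apply: (big_morph (meval w)); [exact: mevalD | exact: meval0]. Qed.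

Lemma C_sum (F : 'I_n -> R) : (\sum_i F i)%:MP = \sum_i (F i)%:MP :> P.
Proof. by apply: (big_morph (fun c : R => c%:MP : P)); [exact: mpolyCD | exact: mpolyC0]. Qed.

Lemma d1 i : d i (1 : P) = 0.
Proof. by rewrite -mpolyC1 mderivC. Qed.

Lemma dL v j : d j (Lf v) = (v j)%:MP.
Proof.
rewrite /Lf d_sum.
under eq_bigr => i _ do rewrite mderiv_mulC dX mpolyC_nat.
by rewrite sum_delta'.
Qed.

Lemma dQ j : d j Qf = 2%:R * 'X_j.
Proof.
rewrite /Qf d_sum.
under eq_bigr => i _ do rewrite mderivM dX mpolyC_nat.
rewrite big_split /= (eq_bigr (fun i => 'X_i * (i == j)%:R)) => [|i _]; last by rewrite mulrC.
by rewrite sum_delta'; ring.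
Qed.

Lemma E_M p q : Eop (p * q) = Eop p * q + p * Eop q.
Proof.
rewrite /Eop mulr_suml mulr_sumr -big_split; apply: eq_bigr => i _ /=.
rewrite mderivM; ring.
Qed.

Lemma dir_M v p q : dir v (p * q) = dir v p * q + p * dir v q.
Proof.
rewrite /dir mulr_suml mulr_sumr -big_split; apply: eq_bigr => i _ /=.
rewrite mderivM; ring.
Qed.

Lemma lap_M p q : lap (p * q) =
  lap p * q + 2%:R * (\sum_i d i p * d i q) + p * lap q.
Proof.
rewrite /lap mulr_suml mulr_sumr [in X in _ + X]mulr_sumr -!big_split.
apply: eq_bigr => i _ /=.
rewrite !mderivM raddfD /= !mderivM; ring.
Qed.

Lemma E_D p q : Eop (p + q) = Eop p + Eop q.
Proof.
rewrite /Eop -big_split; apply: eq_bigr => i _ /=; rewrite raddfD /=; ring.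
Qed.
Lemma E_N p : Eop (- p) = - Eop p.
Proof.
rewrite /Eop -sumrN; apply: eq_bigr => i _ /=; rewrite raddfN /=; ring.
Qed.
Lemma E_C c p : Eop (c%:MP * p) = c%:MP * Eop p.
Proof.
rewrite /Eop mulr_sumr; apply: eq_bigr => i _ /=; rewrite mderiv_mulC; ring.
Qed.
Lemma dir_D v p q : dir v (p + q) = dir v p + dir v q.
Proof.
rewrite /dir -big_split; apply: eq_bigr => i _ /=; rewrite raddfD /=; ring.
Qed.
Lemma dir_N v p : dir v (- p) = - dir v p.
Proof.
rewrite /dir -sumrN; apply: eq_bigr => i _ /=; rewrite raddfN /=; ring.
Qed.
Lemma dir_C v c p : dir v (c%:MP * p) = c%:MP * dir v p.
Proof.
rewrite /dir mulr_sumr; apply: eq_bigr => i _ /=; rewrite mderiv_mulC; ring.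
Qed.
Lemma lap_D p q : lap (p + q) = lap p + lap q.
Proof.
rewrite /lap -big_split; apply: eq_bigr => i _ /=; rewrite !raddfD /=; ring.
Qed.
Lemma lap_N p : lap (- p) = - lap p.
Proof.
rewrite /lap -sumrN; apply: eq_bigr => i _ /=; rewrite !raddfN /=; ring.
Qed.
Lemma lap_C c p : lap (c%:MP * p) = c%:MP * lap p.
Proof.
rewrite /lap mulr_sumr; apply: eq_bigr => i _ /=; rewrite !mderiv_mulC; ring.
Qed.

Lemma E_1 : Eop 1 = 0.
Proof. by rewrite /Eop big1 // => i _; rewrite d1 mulr0. Qed.
Lemma E_L v : Eop (Lf v) = Lf v.
Proof. by rewrite /Eop /Lf; apply: eq_bigr => i _ /=; rewrite dL mulrC. Qed.
Lemma E_Q : Eop Qf = 2%:R * Qf.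
Proof.
rewrite /Eop /Qf mulr_sumr; apply: eq_bigr => i _ /=; rewrite dQ; ring.
Qed.
Lemma dir_L v w : dir v (Lf w) = (\sum_i v i * w i)%:MP.
Proof.
rewrite /dir C_sum; apply: eq_bigr => i _ /=; by rewrite dL mpolyCM.
Qed.
Lemma dir_Q v : dir v Qf = 2%:R * Lf v.
Proof.
rewrite /dir /Lf mulr_sumr; apply: eq_bigr => i _ /=; rewrite dQ; ring.
Qed.
Lemma dir_1 v : dir v 1 = 0.
Proof. by rewrite /dir big1 // => i _; rewrite d1 mulr0. Qed.
Lemma lap_1 : lap 1 = 0.
Proof. by rewrite /lap big1 // => i _; rewrite !d1 mderiv0. Qed.
Lemma lap_L v : lap (Lf v) = 0.
Proof. by rewrite /lap big1 // => i _; rewrite dL mderivC. Qed.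
Lemma lap_Q : lap Qf = (2 * n)%:R.
Proof.
have h i : d i (2%:R * 'X_i : P) = 2%:R.
  by rewrite -mpolyC_nat mderiv_mulC dX eqxx mpolyC1 mulr1 mpolyC_nat.
rewrite /lap; under eq_bigr => i _ do rewrite dQ h.
by rewrite sumr_const card_ord natrM mulr_natr.
Qed.
Lemma cross_L v p : \sum_i d i (Lf v) * d i p = dir v p.
Proof. by apply: eq_bigr => i _ /=; rewrite dL. Qed.
Lemma cross_Q p : \sum_i d i Qf * d i p = 2%:R * Eop p.
Proof.
rewrite /Eop mulr_sumr; apply: eq_bigr => i _ /=; rewrite dQ; ring.
Qed.


Fixpoint D (k : nat) (p q : P) : R :=
  match k with
  | 0 => p.@[z0] * q.@[z0]
  | k'.+1 => \sum_i D k' (d i p) (d i q)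
  end.

Lemma DS k (p q : P) : D k.+1 p q = \sum_i D k (d i p) (d i q).
Proof. by []. Qed.

Lemma D_sym k p q : D k p q = D k q p.
Proof.
elim: k p q => [|k IH] p q /=; first by rewrite mulrC.
by apply: eq_bigr => i _; rewrite IH.
Qed.

Lemma D_addl k p q r : D k (p + q) r = D k p r + D k q r.
Proof.
elim: k p q r => [|k IH] p q r /=; first by rewrite mevalD mulrDl.
by rewrite -big_split; apply: eq_bigr => i _ /=; rewrite mderivD IH.
Qed.

Lemma D_Cl k c p r : D k (c%:MP * p) r = c * D k p r.
Proof.
elim: k p r => [|k IH] p r /=; first by rewrite mevalM mevalC mulrA.
by rewrite mulr_sumr; apply: eq_bigr => i _ /=; rewrite mderiv_mulC IH.
Qed.

Lemma D_0l k r : D k 0 r = 0.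
Proof.
elim: k r => [|k IH] r /=; first by rewrite meval0 mul0r.
by rewrite big1 // => i _; rewrite mderiv0 IH.
Qed.

Lemma D_Nl k p r : D k (- p) r = - D k p r.
Proof.
by apply/eqP; rewrite -subr_eq0 opprK -D_addl addNr D_0l.
Qed.

Lemma D_suml k (I : finType) (F : I -> P) r : D k (\sum_i F i) r = \sum_i D k (F i) r.
Proof.
by apply: (big_morph (fun p => D k p r)); [move=> ??; exact: D_addl | exact: D_0l].
Qed.

Lemma D_addr k p q r : D k r (p + q) = D k r p + D k r q.
Proof. by rewrite !(D_sym k r) D_addl. Qed.
Lemma D_Cr k c p r : D k r (c%:MP * p) = c * D k r p.
Proof. by rewrite !(D_sym k r) D_Cl. Qed.
Lemma D_0r k r : D k r 0 = 0.
Proof. by rewrite D_sym D_0l. Qed.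
Lemma D_sumr k (I : finType) (F : I -> P) r : D k r (\sum_i F i) = \sum_i D k r (F i).
Proof. by rewrite D_sym D_suml; apply: eq_bigr => i _; rewrite D_sym. Qed.

Lemma D_ge0 k p : 0 <= D k p p.
Proof.
elim: k p => [|k IH] p /=; first by rewrite -expr2 sqr_ge0.
by apply: sumr_ge0 => i _.
Qed.

Lemma D0X i (p q : P) : D 0 ('X_i * p) q = 0.
Proof. by rewrite /= mevalM mevalXU /z0 !mul0r. Qed.

Lemma dXp i j (p : P) : d j ('X_i * p) = ((i == j)%:R)%:MP * p + 'X_i * d j p.
Proof. by rewrite mderivM dX. Qed.

Lemma D_X i k (p q : P) : D k.+1 ('X_i * p) q = k.+1%:R * D k p (d i q).
Proof.
elim: k p q => [|k IH] p q.
  rewrite DS; under eq_bigr => j _ do rewrite dXp D_addl D_Cl D0X addr0.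
  by rewrite sum_delta mul1r.
rewrite DS; under eq_bigr => j _ do rewrite dXp D_addl D_Cl IH.
rewrite big_split /= sum_delta -mulr_sumr.
have -> : \sum_j D k (d j p) (d i (d j q)) = D k.+1 p (d i q).
  by rewrite DS; apply: eq_bigr => j _; rewrite mderiv_comm.
by rewrite -DS -[k.+2]addn1 natrD; ring.
Qed.

Lemma Qf_mul (r : P) : Qf * r = \sum_i 'X_i * ('X_i * r).
Proof. by rewrite /Qf mulr_suml; apply: eq_bigr => i _; rewrite mulrA. Qed.

Lemma D_Q k (r H : P) : lap H = 0 -> D k (Qf * r) H = 0.
Proof.
move=> hH; rewrite Qf_mul D_suml.
case: k => [|k]; first by rewrite big1 // => i _; rewrite D0X.
under eq_bigr => i _ do rewrite D_X.
case: k => [|k]; first by rewrite big1 // => i _; rewrite D0X mulr0.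
under eq_bigr => i _ do rewrite D_X.
rewrite -mulr_sumr -mulr_sumr -D_sumr.
by rewrite -[\sum_i d i (d i H)]/(lap H) hH D_0r !mulr0.
Qed.


Definition ee (k : nat) : R := (k.+1)%:R + n%:R - 2.
Definition aa (k : nat) : R := (2 * k.+1)%:R + n%:R - 2.

Definition hstep (v : 'I_n -> R) (k : nat) (ab : P * P) : P * P :=
  (ab.2, ((ee k)^-1)%:MP * ((aa k)%:MP * (Lf v * ab.2) - ((k.+1)%:R)%:MP * (Qf * ab.1))).

Fixpoint hp (v : 'I_n -> R) (k : nat) : P * P :=
  match k with
  | 0 => (1, Lf v)
  | k'.+1 => hstep v k' (hp v k')
  end.

Fixpoint gp (k : nat) : R * R :=
  match k with
  | 0 => (1, 1)
  | k'.+1 => ((gp k').2, (ee k')^-1 * aa k' * (gp k').2)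
  end.

Lemma aaP k : (aa k)%:MP = (2 * k.+1)%:R + n%:R - 2 :> P.
Proof. by rewrite /aa rmorphB rmorphD !rmorph_nat. Qed.
Lemma eeP k : (ee k)%:MP = (k.+1)%:R + n%:R - 2 :> P.
Proof. by rewrite /ee rmorphB rmorphD !rmorph_nat. Qed.

Hypothesis n2 : (2 <= n)%N.

Lemma ee_gt0 k : 0 < ee k.
Proof.
rewrite /ee -natrD -[2]/(2%:R) -natrB; last by lia.
rewrite ltr0n; lia.
Qed.
Lemma aa_gt0 k : 0 < aa k.
Proof.
rewrite /aa -natrD -[2]/(2%:R) -natrB; last by lia.
rewrite ltr0n; lia.
Qed.

Lemma einv k : ((ee k)^-1)%:MP * (ee k)%:MP = 1 :> P.
Proof. by rewrite -rmorphM mulVf ?rmorph1 // gt_eqF ?ee_gt0. Qed.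

Lemma gp_gt0 k : 0 < (gp k).1 /\ 0 < (gp k).2.
Proof.
elim: k => [|k [_ IH]] /=; first by rewrite ltr01.
split => //; rewrite mulr_gt0 // mulr_gt0 ?invr_gt0 ?ee_gt0 ?aa_gt0 //.
Qed.

Lemma ev_Q w : Qf.@[w] = \sum_i w i * w i.
Proof. by rewrite /Qf ev_sum; apply: eq_bigr => i _; rewrite mevalM mevalXU. Qed.
Lemma ev_L v w : (Lf v).@[w] = \sum_i v i * w i.
Proof.
by rewrite /Lf ev_sum; apply: eq_bigr => i _; rewrite mevalM mevalXU mevalC.
Qed.

Lemma hp_ev v w k : Qf.@[w] = 1 ->
  ((hp v k).1.@[w], (hp v k).2.@[w]) = gegen_pair n k ((Lf v).@[w]).
Proof.
move=> hw; elim: k => [|k IH] /=; first by rewrite meval1.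
rewrite -IH /=; congr pair.
rewrite !(mevalM, mevalB, mevalC) hw /aa /ee; ring.
Qed.

Section Inv.
Variable u : 'I_n -> R.
Hypothesis hu : \sum_i u i * u i = 1.

Definition Inv k (a b : P) :=
  [/\ Eop a = k%:R * a, Eop b = k.+1%:R * b, lap a = 0 /\ lap b = 0,
      dir u b = k.+1%:R * a &
      Qf * dir u a = ((2 * k)%:R + n%:R - 2) * (Lf u * a) - (k%:R + n%:R - 2) * b].

Lemma hp_inv k : Inv k (hp u k).1 (hp u k).2.
Proof.
have dLu : dir u (Lf u) = 1 by rewrite dir_L hu mpolyC1.
elim: k => [|k IH].
  rewrite /Inv /= E_1 E_L lap_1 lap_L dLu dir_1 mulr0; split => //; ring.
rewrite [hp u k.+1]/= /hstep /=.
move: IH; set a := (hp u k).1; set b := (hp u k).2.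
case=> Ea Eb [la lb] db Qda.
set w := (aa k)%:MP * (Lf u * b) - ((k.+1)%:R)%:MP * (Qf * a).
have ec : (ee k)%:MP * (((ee k)^-1)%:MP * w) = w.
  by rewrite mulrA (mulrC (ee k)%:MP) einv mul1r.
have fold1 (X : P) : X = ((ee k)^-1)%:MP * ((ee k)%:MP * X).
  by rewrite mulrA einv mul1r.
split => //.
- rewrite E_C /w E_D E_N !E_C !E_M E_L E_Q Ea Eb aaP mpolyC_nat; ring.
- split => //; rewrite lap_C /w lap_D lap_N !lap_C !lap_M lap_L cross_L lap_Q cross_Q la lb db Ea aaP mpolyC_nat.
  ring.
- rewrite dir_C /w dir_D dir_N !dir_C !dir_M dLu dir_Q db Qda.
  rewrite [in RHS](fold1 (k.+2%:R * b)); congr (_ * _).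
  rewrite eeP aaP mpolyC_nat; ring.
- rewrite db -eeP ec /w aaP mpolyC_nat; ring.
Qed.

End Inv.

Lemma hp_dec v k : exists ra rb,
  (hp v k).1 = ((gp k).1)%:MP * Lf v ^+ k + Qf * ra /\
  (hp v k).2 = ((gp k).2)%:MP * Lf v ^+ k.+1 + Qf * rb.
Proof.
elim: k => [|k [ra [rb [ha hb]]]].
  by exists 0, 0; rewrite /= !mulr0 !addr0 mpolyC1 expr0 expr1 !mul1r.
exists rb; exists (((ee k)^-1)%:MP * ((aa k)%:MP * (Lf v * rb) - ((k.+1)%:R)%:MP * (hp v k).1)).
rewrite [hp v k.+1]/= /hstep /=; split => //.
rewrite {1}hb !rmorphM !exprS; ring.
Qed.

Lemma d_exp i (q : P) m : d i (q ^+ m.+1) = (m.+1)%:R * (q ^+ m * d i q).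
Proof.
elim: m => [|m IH]; first by rewrite expr1 expr0; ring.
rewrite exprS mderivM IH !exprS; ring.
Qed.

Section Cl.
Variable y : 'I_n -> R.
Definition Cl m (p : P) := D m (Lf y ^+ m) p = (m`!%:R) ^+ 2 * p.@[y].

Lemma Cl_X m i p : Cl m p -> Cl m.+1 ('X_i * p).
Proof.
rewrite /Cl => h; rewrite D_sym D_X d_exp dL -mpolyC_nat. rewrite (D_Cr m (m.+1%:R) (Lf y ^+ m * (y i)%:MP) p).
rewrite (mulrC (Lf y ^+ m)) (D_Cr m (y i) (Lf y ^+ m) p) D_sym h.
rewrite mevalM mevalXU factS natrM; ring.
Qed.

Lemma Cl_add m p q : Cl m p -> Cl m q -> Cl m (p + q).
Proof. by rewrite /Cl => hp hq; rewrite D_addr hp hq mevalD mulrDr. Qed.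
Lemma Cl_C m c p : Cl m p -> Cl m (c%:MP * p).
Proof. by rewrite /Cl => hp; rewrite D_Cr hp mevalM mevalC; ring. Qed.
Lemma Cl_N m p : Cl m p -> Cl m (- p).
Proof.
by rewrite /Cl => hp; rewrite D_sym D_Nl D_sym hp mevalN mulrN.
Qed.
Lemma Cl_0 m : Cl m 0.
Proof. by rewrite /Cl D_0r meval0 mulr0. Qed.
Lemma Cl_sum m (F : 'I_n -> P) : (forall i, Cl m (F i)) -> Cl m (\sum_i F i).
Proof.
move=> h; elim/big_ind: _ => //; [exact: Cl_0 | exact: Cl_add].
Qed.

Lemma Cl_1 : Cl 0 1.
Proof. by rewrite /Cl expr0 /= !meval1 ?fact0 ?expr1n ?mulr1. Qed.

Lemma hp_Cl v k : Cl k (hp v k).1 /\ Cl k.+1 (hp v k).2.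
Proof.
elim: k => [|k [ha hb]].
  split; first exact: Cl_1.
  rewrite /Lf; apply: Cl_sum => i; apply: Cl_C.
  rewrite -[X in Cl _ X]mulr1; apply: Cl_X; exact: Cl_1.
rewrite [hp v k.+1]/= /hstep /=; split => //.
apply: Cl_C; apply: Cl_add.
  apply: Cl_C; rewrite /Lf mulr_suml; apply: Cl_sum => i; rewrite -mulrA; apply: Cl_C.
  exact: Cl_X.
apply: Cl_N; apply: Cl_C; rewrite Qf_mul; apply: Cl_sum => i; apply: Cl_X; exact: Cl_X.
Qed.
End Cl.


Lemma gram_ge0 (N k : nat) (y : 'I_N -> 'I_n -> R) :
  (forall i, \sum_l y i l * y i l = 1) ->
  0 <= \sum_i \sum_j gegen n k (\sum_l y i l * y j l).
Proof.
move=> hy.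
pose h i := (hp (y i) k).1.
have key i j : D k (h i) (h j) =
    (gp k).1 * (k`!%:R) ^+ 2 * gegen n k (\sum_l y i l * y j l).
  have [ra [rb [ha _]]] := hp_dec (y i) k.
  rewrite /h ha D_addl D_Cl D_Q; last first.
    by case: (@hp_inv (y j) (hy j) k) => _ _ [la _] _ _.
  have [hc _] := hp_Cl (y i) (y j) k.
  rewrite hc addr0.
  have ev := hp_ev (y j) (y i) k.
  rewrite ev_Q hy in ev; have {}ev := ev erefl.
  rewrite (_ : \sum_l y i l * y j l = (Lf (y j)).@[y i]); last first.
    by rewrite ev_L; apply: eq_bigr => l _; rewrite mulrC.
  by rewrite /gegen -ev /= mulrA.
have := D_ge0 k (\sum_i h i).
rewrite D_suml; under eq_bigr => i _ do rewrite D_sumr.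
under eq_bigr => i _ do under eq_bigr => j _ do rewrite key.
under eq_bigr => i _ do rewrite -mulr_sumr.
rewrite -mulr_sumr pmulr_rge0 //.
apply: mulr_gt0; first by case: (gp_gt0 k).
by rewrite exprn_gt0 // ltr0n fact_gt0.
Qed.

End Poly.



Lemma fin_max (R : realDomainType) (T : finType) (P : pred T) (F : T -> R) t0 :
  P t0 -> exists2 t, P t & forall s, P s -> F s <= F t.
Proof.
move=> Pt0; case: (@Order.TotalTheory.arg_maxP _ R T t0 P F Pt0) => t Pt H.
by exists t.
Qed.

Section Main.
Variable R : realType.
Variable n : nat.

Lemma dotpC (u v : 'rV[R]_n) : dotp u v = dotp v u.
Proof. by rewrite /dotp; apply: eq_bigr => l _; rewrite mulrC. Qed.

Lemma dist2E (u v : 'rV[R]_n) : on_sphere u -> on_sphere v ->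
  dist2 u v = Num.sqrt (2 - 2 * dotp u v).
Proof.
rewrite /on_sphere /dist2 => hu hv; congr Num.sqrt.
rewrite /dotp in hu hv *.
have -> : \sum_(j < n) (u - v) 0 j * (u - v) 0 j =
   \sum_(j < n) (u 0 j * u 0 j + v 0 j * v 0 j - 2 * (u 0 j * v 0 j)).
  by apply: eq_bigr => l _; rewrite !mxE; ring.
by rewrite sumrB big_split /= hu hv -mulr_sumr.
Qed.

Lemma dot_ge (u v : 'rV[R]_n) : on_sphere u -> on_sphere v -> -1 <= dotp u v.
Proof.
rewrite /on_sphere /dotp => hu hv.
have : 0 <= \sum_(j < n) (u 0 j + v 0 j) * (u 0 j + v 0 j).
  by apply: sumr_ge0 => l _; rewrite -expr2 sqr_ge0.
have -> : \sum_(j < n) (u 0 j + v 0 j) * (u 0 j + v 0 j) =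
   \sum_(j < n) (u 0 j * u 0 j + v 0 j * v 0 j + 2 * (u 0 j * v 0 j)).
  by apply: eq_bigr => l _; ring.
rewrite big_split /= big_split /= hu hv -mulr_sumr; lra.
Qed.

Lemma dot_le (u v : 'rV[R]_n) : on_sphere u -> on_sphere v -> dotp u v <= 1.
Proof.
move=> hu hv.
rewrite /on_sphere /dotp in hu hv *.
have : 0 <= \sum_(j < n) (u 0 j - v 0 j) * (u 0 j - v 0 j).
  by apply: sumr_ge0 => l _; rewrite -expr2 sqr_ge0.
have -> : \sum_(j < n) (u 0 j - v 0 j) * (u 0 j - v 0 j) =
   \sum_(j < n) (u 0 j * u 0 j + v 0 j * v 0 j - 2 * (u 0 j * v 0 j)).
  by apply: eq_bigr => l _; ring.
rewrite sumrB big_split /= hu hv -mulr_sumr; lra.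
Qed.


Hypothesis n2 : (2 <= n)%N.

Lemma delsarte N (y : 'I_N -> 'rV[R]_n) k c :
  (forall i, on_sphere (y i)) -> (forall i, (1 <= i <= k)%N -> 0 <= c i) ->
  c 0%N * (N%:R * N%:R) <= \sum_i \sum_j gegen_sum n k c (dotp (y i) (y j)).
Proof.
move=> hy hc.
rewrite /gegen_sum.
under eq_bigr => i _ do rewrite exchange_big /=.
rewrite exchange_big /= big_ord_recl /=.
have g0 t : gegen n 0 t = 1 :> R by [].
have -> : \sum_(i < N) \sum_(i0 < N) c 0%N * gegen n 0 (dotp (y i) (y i0)) =
    c 0%N * (N%:R * N%:R).
  under eq_bigr => i _ do under eq_bigr => j _ do rewrite g0 mulr1.
  rewrite !sumr_const !card_ord; ring.
rewrite lerDl; apply: sumr_ge0 => l _.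
have -> : \sum_(i < N) \sum_(j < N) c (bump 0 l) * gegen n (bump 0 l) (dotp (y i) (y j)) =
   c (bump 0 l) * \sum_(i < N) \sum_(j < N) gegen n (bump 0 l) (\sum_m y i 0 m * y j 0 m).
  rewrite mulr_sumr; apply: eq_bigr => i _; rewrite mulr_sumr; apply: eq_bigr => j _.
  by [].
apply: mulr_ge0; first by apply: hc; rewrite /bump; have := ltn_ord l; lia.
apply: (@gram_ge0 R n n2 N (bump 0 l) (fun i m => y i 0 m)) => i; exact: hy i.
Qed.

Lemma split_diag N (F : 'I_N -> 'I_N -> R) :
  \sum_i \sum_j F i j = \sum_i F i i + \sum_i \sum_(j | j != i) F i j.
Proof. by rewrite -big_split; apply: eq_bigr => i _; rewrite (bigD1 i). Qed.

Lemma zero_terms N (F : 'I_N -> 'I_N -> R) :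
  (forall i j, j != i -> F i j <= 0) ->
  0 <= \sum_i \sum_(j | j != i) F i j -> forall i j, j != i -> F i j = 0.
Proof.
move=> hF h0 i j hji.
have inn i' : \sum_(j | j != i') F i' j <= 0 by apply: sumr_le0 => j' hj'; exact: hF.
have tot : \sum_i' - (\sum_(j | j != i') F i' j) = 0.
  by rewrite sumrN; apply/eqP; rewrite oppr_eq0 eq_le h0 andbT; apply: sumr_le0.
have hi : \sum_(j | j != i) F i j = 0.
  apply/eqP; rewrite -oppr_eq0; apply/eqP.
  apply: (@psumr_eq0P _ _ xpredT (fun i' => - (\sum_(j | j != i') F i' j)) _ tot i isT).
  by move=> i' _; rewrite oppr_ge0.
have tot2 : \sum_(j | j != i) - F i j = 0 by rewrite sumrN hi oppr0.
apply/eqP; rewrite -oppr_eq0; apply/eqP.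
apply: (@psumr_eq0P _ _ (fun j => j != i) (fun j => - F i j) _ tot2 j hji).
by move=> j' hj'; rewrite oppr_ge0 hF.
Qed.

Lemma max_att N (y : 'I_N -> 'rV[R]_n) : (2 <= N)%N ->
  (forall i j : 'I_N, (i < j)%N -> dotp (y i) (y j) <= max_inner y) /\
  exists i j : 'I_N, (i < j)%N /\ max_inner y = dotp (y i) (y j).
Proof.
move=> N2.
pose F (p : 'I_N * 'I_N) := dotp (y p.1) (y p.2).
have h0 : (0 < N)%N by lia.
have h1 : (1 < N)%N by lia.
have [[a b] /= Pab hmax] := @fin_max _ _ (fun p : 'I_N * 'I_N => (p.1 < p.2)%N) F
    (Ordinal h0, Ordinal h1) isT.
have ubE : ubound [set r | exists i j : 'I_N, (i < j)%N /\ r = dotp (y i) (y j)] (F (a, b)).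
  by move=> r [i [j [hij ->]]]; exact: (hmax (i, j) hij).
have neE : ([set r | exists i j : 'I_N, (i < j)%N /\ r = dotp (y i) (y j)] !=set0)%classic.
  by exists (F (a, b)); exists a, b.
have supE : max_inner y = F (a, b).
  apply/le_anti/andP; split; first exact: ge_sup.
  apply: sup_upper_bound; first by split => //; exists (F (a, b)).
  by exists a, b.
split; last by exists a, b.
by move=> i j hij; rewrite supE; exact: (hmax (i, j) hij).
Qed.

Lemma min_le N (y : 'I_N -> 'rV[R]_n) (i j : 'I_N) : (i < j)%N ->
  min_dist y <= dist2 (y i) (y j).
Proof.
move=> hij; apply: ge_inf; last by exists i, j.
by exists 0 => r [i' [j' [_ ->]]]; exact: sqrtr_ge0.
Qed.

End Main.

Theorem theorem3p1 (R : realType) (n N : nat) (x : 'I_N -> 'rV[R]_n) :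
  (2 <= n)%N -> (2 <= N)%N ->
  injective x ->
  (forall i, on_sphere (x i)) ->
  (* (i) *)
  forall (k1 : nat) (c : nat -> R),
  inP k1 (max_inner x) n c ->
  N%:R = fsharp n k1 c ->
  (* (ii) *)
  forall t2 : R, -1 <= t2 < max_inner x ->
  (forall t : R, t2 < t < max_inner x -> gegen_sum n k1 c t != 0) ->
  (* (iii) *)
  forall (K2 : nat) (e : nat -> R),
  inP K2 t2 n e ->
  fsharp n K2 e < N%:R ->
  tammes_d R n N = min_dist x.
Proof.
move=> n2 N2 _ hx k1 c [_ hc0 hc hf] hN t2 /andP[ht2a ht2b] hnz K2 e [_ he0 he hg] hNe.
have [hubx [a [b [ab htC]]]] := @max_att R n n2 N x N2.
have Npos : (0 : R) < N%:R by rewrite ltr0n; lia.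
have claim : forall y : 'I_N -> 'rV[R]_n, (forall i, on_sphere (y i)) ->
    exists i j : 'I_N, (i < j)%N /\ max_inner x <= dotp (y i) (y j).
  move=> y hy.
  case: (pselect (exists i j : 'I_N, (i < j)%N /\ max_inner x <= dotp (y i) (y j))) => // Hn.
  exfalso.
  have hlt : forall i j : 'I_N, j != i -> dotp (y i) (y j) < max_inner x.
    move=> i j hji; rewrite ltNge; apply/negP => hle.
    case: (ltngtP i j) => [hij|hji'|heq].
    - by apply: Hn; exists i, j.
    - by apply: Hn; exists j, i; rewrite dotpC.
    - by move/eqP: hji; apply; apply: val_inj.
  have hf1 : gegen_sum n k1 c 1 = N%:R * c 0%N.
    by rewrite hN /fsharp divfK // gt_eqF.
  have D1 := @delsarte R n n2 N y k1 c hy hc.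
  rewrite split_diag in D1.
  have E1 : \sum_i gegen_sum n k1 c (dotp (y i) (y i)) = c 0%N * (N%:R * N%:R).
    under eq_bigr => i _ do rewrite (hy i) hf1.
    rewrite sumr_const card_ord; ring.
  rewrite E1 in D1.
  have hoff : 0 <= \sum_i \sum_(j | j != i) gegen_sum n k1 c (dotp (y i) (y j)) by lra.
  have hz' : forall i j : 'I_N, j != i -> gegen_sum n k1 c (dotp (y i) (y j)) = 0.
    apply: (@zero_terms R N _ _ hoff) => i j hji; apply: hf.
    by rewrite dot_ge ?hy //= ltW // hlt.
  have hle2 : forall i j : 'I_N, j != i -> dotp (y i) (y j) <= t2.
    move=> i j hji; rewrite leNgt; apply/negP => h.
    have := hnz (dotp (y i) (y j)); rewrite h hlt // hz' // eqxx.
    by move=> /(_ isT).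
  have D2 := @delsarte R n n2 N y K2 e hy he.
  rewrite split_diag in D2.
  have E2 : \sum_i gegen_sum n K2 e (dotp (y i) (y i)) = N%:R * gegen_sum n K2 e 1.
    under eq_bigr => i _ do rewrite (hy i).
    by rewrite sumr_const card_ord mulr_natl.
  rewrite E2 in D2.
  have hoff2 : \sum_i \sum_(j | j != i) gegen_sum n K2 e (dotp (y i) (y j)) <= 0.
    apply: sumr_le0 => i _; apply: sumr_le0 => j hji; apply: hg.
    by rewrite dot_ge ?hy //= hle2.
  have : N%:R * (N%:R * e 0%N) <= N%:R * gegen_sum n K2 e 1.
    have -> : N%:R * (N%:R * e 0%N) = e 0%N * (N%:R * N%:R) by ring.
    lra.
  rewrite ler_pM2l // => h2.
  move: hNe; rewrite /fsharp ltr_pdivrMr //; lra.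
have hdx : Num.sqrt (2 - 2 * max_inner x) <= min_dist x.
  apply: lb_le_inf; first by exists (dist2 (x a) (x b)); exists a, b.
  move=> r [i [j [hij ->]]]; rewrite dist2E ?hx //; apply: ler_wsqrtr.
  have := hubx i j hij; lra.
have hle : forall y : 'I_N -> 'rV[R]_n, (forall i, on_sphere (y i)) -> min_dist y <= min_dist x.
  move=> y hy; have [i [j [hij hge]]] := claim y hy.
  apply: (le_trans (@min_le R n N y i j hij)); rewrite dist2E ?hy //.
  apply: le_trans hdx; apply: ler_wsqrtr; lra.
rewrite /tammes_d; apply/le_anti/andP; split.
  apply: ge_sup; first by exists (min_dist x), x.
  by move=> r [y [hy ->]]; exact: hle.
apply: sup_upper_bound; last by exists x.
split; first by exists (min_dist x), x.
by exists (min_dist x) => r [y [hy ->]]; exact: hle.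
Qed.
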